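(* Let $f,g\in H$ have a common fixed point $p\in\mathbb{P}^1$. Then every element of the second derived subgroup $\langle f,g\rangle''$ of the subgroup $\langle f,g\rangle<H$ generated by $f$ and $g$ acts trivially on some neighbourhood of $p$.
   Context: Let $\mathbb{P}^1=\mathbb{P}^1(\mathbb{R})$ with its usual topology (a circle) and the natural action of $\mathrm{PSL}_2(\mathbb{R})$. Let $G$ be the group of homeomorphisms of $\mathbb{P}^1$ which are piecewise in $\mathrm{PSL}_2(\mathbb{R})$ with finitely many pieces, each an interval of $\mathbb{P}^1$. Let $\infty\in\mathbb{P}^1$ be the point corresponding to the first basis vector of $\mathbb{R}^2$ and $H<G$ the stabilizer of $\infty$. For a group $J$, $J''$ denotes $[J',J']$ where $J'=[J,J]$. *)

(* Defs.v *)
From Stdlib Require Import Reals List.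
Open Scope R_scope.

(* P^1(R) = R ∪ {∞}: [Some t] is the line through (t,1), i.e. [t:1];
   [None] is ∞ = [1:0], the line of the first basis vector. *)
Definition P1 := option R.
Definition infty : P1 := None.

Definition P1_nbhd (p : P1) (U : P1 -> Prop) : Prop :=
  match p with
  | Some x => exists e, 0 < e /\ forall t, Rabs (t - x) < e -> U (Some t)
  | None => U None /\ exists M, forall t, M < Rabs t -> U (Some t)
  end.

Definition P1_continuous_at (f : P1 -> P1) (q : P1) : Prop :=
  forall V, P1_nbhd (f q) V -> P1_nbhd q (fun z => V (f z)).

(* Projective action of the matrix [[a, b], [c, d]] on [x:y] |-> [ax+by : cx+dy]. *)
Definition mobius (a b c d : R) (q : P1) : P1 :=
  match q with
  | Some t => if Req_EM_T (c * t + d) 0 then None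
              else Some ((a * t + b) / (c * t + d))
  | None => if Req_EM_T c 0 then None else Some (a / c)
  end.

Definition inverse_of {T : Type} (h h' : T -> T) : Prop :=
  (forall x, h (h' x) = x) /\ (forall x, h' (h x) = x).

(* Piecewise in PSL_2(R) with finitely many pieces (intervals): there is a
   finite set S of real breakpoints (∞ may always be added as a breakpoint)
   such that on each connected component of R \ S the map agrees with a
   single element of SL_2(R) (values at breakpoints are then forced by
   continuity). *)
Definition piecewise_projective (f : P1 -> P1) : Prop :=
  exists S : list R,
    forall x, ~ In x S ->
      exists a b c d, a * d - b * c = 1 /\
        forall y, (forall z, In z S -> ~ (Rmin x y <= z <= Rmax x y)) ->
          f (Some y) = mobius a b c d (Some y).

Definition in_G (f : P1 -> P1) : Prop :=
  exists f', inverse_of f f' /\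
    (forall q, P1_continuous_at f q) /\ (forall q, P1_continuous_at f' q) /\
    piecewise_projective f.

Definition in_H (f : P1 -> P1) : Prop := in_G f /\ f infty = infty.

Inductive gen {T : Type} (A : (T -> T) -> Prop) : (T -> T) -> Prop :=
  | gen_base h : A h -> gen A h
  | gen_id : gen A (fun x => x)
  | gen_comp h k : gen A h -> gen A k -> gen A (fun x => h (k x))
  | gen_inv h h' : gen A h -> inverse_of h h' -> gen A h'.

Definition commutators {T : Type} (K : (T -> T) -> Prop) (h : T -> T) : Prop :=
  exists x x' y y', K x /\ K y /\ inverse_of x x' /\ inverse_of y y' /\
    h = (fun z => x' (y' (x (y z)))).

Definition derived {T : Type} (K : (T -> T) -> Prop) := gen (commutators K).
Definition second_derived {T : Type} (K : (T -> T) -> Prop) := derived (derived K).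

(* Main.v *)
Require Import Defs.
From Stdlib Require Import Reals List Lra Psatz.
Open Scope R_scope.

Definition emb (p : P1) (u : R) : P1 :=
  match p with None => Some u | Some x0 => Some (x0 + / u) end.

Definition germ1 (p : P1) (h : P1 -> P1) (s M a b : R) : Prop :=
  forall u, M < s * u -> h (emb p u) = emb p (a * u + b).

Definition Aff (S : R -> R -> Prop) (p : P1) (h : P1 -> P1) : Prop :=
  h p = p /\ forall s, (s = 1 \/ s = -1) -> exists M a b, S a b /\ germ1 p h s M a b.

Lemma sabs s b : (s = 1 \/ s = -1) -> - Rabs b <= s * b <= Rabs b.
Proof.
  intros [-> | ->]; split; pose proof (Rle_abs b); pose proof (Rle_abs (-b));
  rewrite ?Rabs_Ropp in *; lra.
Qed.

Lemma comp1 p h k s M a b M' a' b' :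
  germ1 p h s M a b -> germ1 p k s M' a' b' -> 0 < a' -> (s = 1 \/ s = -1) ->
  germ1 p (fun z => h (k z)) s (Rmax M' ((Rabs M + Rabs b') / a')) (a * a') (a * b' + b).
Proof.
  intros Hh Hk Ha Hs u Hu.
  assert (H1 : M' < s * u) by (eapply Rle_lt_trans; [apply Rmax_l|exact Hu]).
  assert (H2 : (Rabs M + Rabs b') / a' < s * u) by (eapply Rle_lt_trans; [apply Rmax_r|exact Hu]).
  rewrite (Hk u H1).
  assert (E : Rabs M + Rabs b' = a' * ((Rabs M + Rabs b') / a')) by (field; lra).
  assert (H3 : Rabs M + Rabs b' < a' * (s * u)) by nra.
  pose proof (sabs s b' Hs). pose proof (Rle_abs M).
  rewrite Hh.
  - f_equal; ring.
  - replace (s * (a' * u + b')) with (a' * (s * u) + s * b') by ring. lra.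
Qed.

Lemma inv1 p h h' s M a b :
  germ1 p h s M a b -> 0 < a -> inverse_of h h' -> (s = 1 \/ s = -1) ->
  germ1 p h' s (a * Rabs M + Rabs b) (/ a) (- b / a).
Proof.
  intros Hh Ha [Hi1 Hi2] Hs v Hv.
  assert (E : a * (s * ((v - b) / a)) = s * v - s * b) by (field; lra).
  pose proof (sabs s b Hs). pose proof (Rle_abs M).
  assert (Hu : M < s * ((v - b) / a)) by nra.
  pose proof (Hh _ Hu) as Hhu.
  replace (a * ((v - b) / a) + b) with v in Hhu by (field; lra).
  rewrite <- Hhu, Hi2. f_equal. field. lra.
Qed.

Lemma inv_fix (x x' : P1 -> P1) p : inverse_of x x' -> x p = p -> x' p = p.
Proof. intros [_ H] E. specialize (H p). rewrite E in H. exact H. Qed.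

Lemma germ1_ext p h s M a b a2 b2 : germ1 p h s M a b -> a = a2 -> b = b2 -> germ1 p h s M a2 b2.
Proof. intros H -> ->; exact H. Qed.

Lemma gen_aff (S : R -> R -> Prop) p (A : (P1 -> P1) -> Prop) :
  (forall a b, S a b -> 0 < a) -> S 1 0 ->
  (forall a b a' b', S a b -> S a' b' -> S (a * a') (a * b' + b)) ->
  (forall a b, S a b -> S (/ a) (- b / a)) ->
  (forall h, A h -> Aff S p h) -> forall h, gen A h -> Aff S p h.
Proof.
  intros Hpos H1 Hc Hi HA h Hg. induction Hg as [h Hh| |h k _ [IHh1 IHh2] _ [IHk1 IHk2]|h h' _ [IH1 IH2] Hinv].
  - auto.
  - split; [reflexivity|]. intros s Hs. exists 0, 1, 0. split; [exact H1|].
    intros u _. f_equal; ring.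
  - split; [rewrite IHk1; exact IHh1|]. intros s Hs.
    destruct (IHh2 s Hs) as [M [a [b [Sab Gh]]]].
    destruct (IHk2 s Hs) as [M' [a' [b' [Sab' Gk]]]].
    exists (Rmax M' ((Rabs M + Rabs b') / a')), (a * a'), (a * b' + b).
    split; [apply Hc; assumption|].
    apply comp1; [exact Gh|exact Gk| |exact Hs]. eapply Hpos; exact Sab'.
  - split.
    + exact (inv_fix _ _ _ Hinv IH1).
    + intros s Hs. destruct (IH2 s Hs) as [M [a [b [Sab Gh]]]].
      exists (a * Rabs M + Rabs b), (/ a), (- b / a). split; [apply Hi; assumption|].
      apply (inv1 _ h); [exact Gh| |exact Hinv|exact Hs]. eapply Hpos; eauto.
Qed.

Lemma comm_germ p x x' y y' s M a b N a' b' :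
  germ1 p x s M a b -> germ1 p y s N a' b' -> 0 < a -> 0 < a' ->
  inverse_of x x' -> inverse_of y y' -> (s = 1 \/ s = -1) ->
  exists K, germ1 p (fun z => x' (y' (x (y z)))) s K
    (/ a * (/ a' * (a * a'))) (/ a * (/ a' * (a * b' + b) + - b' / a') + - b / a).
Proof.
  intros Gx Gy Ha Ha' Ix Iy Hs.
  pose proof (comp1 _ _ _ _ _ _ _ _ _ _ Gx Gy Ha' Hs) as Gxy.
  pose proof (inv1 _ _ _ _ _ _ _ Gy Ha' Iy Hs) as Gy'.
  pose proof (inv1 _ _ _ _ _ _ _ Gx Ha Ix Hs) as Gx'.
  assert (P1 : 0 < a * a') by nra.
  pose proof (comp1 _ _ _ _ _ _ _ _ _ _ Gy' Gxy P1 Hs) as G2.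
  assert (P2 : 0 < / a' * (a * a')) by (apply Rmult_lt_0_compat; [apply Rinv_0_lt_compat|]; lra).
  pose proof (comp1 _ _ _ _ _ _ _ _ _ _ Gx' G2 P2 Hs) as G3.
  eexists. exact G3.
Qed.

Definition S0 (a b : R) := 0 < a.
Definition S1 (a b : R) := a = 1.
Definition S2 (a b : R) := a = 1 /\ b = 0.


Lemma comm01 p K : (forall h, K h -> Aff S0 p h) -> forall h, commutators K h -> Aff S1 p h.
Proof.
  intros HK h [x [x' [y [y' [Kx [Ky [Ix [Iy ->]]]]]]]].
  destruct (HK x Kx) as [Fx Ax]. destruct (HK y Ky) as [Fy Ay].
  split.
  - rewrite Fy, Fx, (inv_fix _ _ _ Iy Fy), (inv_fix _ _ _ Ix Fx). reflexivity.
  - intros s Hs. destruct (Ax s Hs) as [M [a [b [Sa Gx]]]].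
    destruct (Ay s Hs) as [N [a' [b' [Sa' Gy]]]].
    unfold S0 in *.
    destruct (comm_germ _ _ _ _ _ _ _ _ _ _ _ _ Gx Gy Sa Sa' Ix Iy Hs) as [Kc G].
    eexists _, 1, _. split; [reflexivity|]. eapply germ1_ext; [exact G| |reflexivity].
    field; lra.
Qed.

Lemma comm12 p K : (forall h, K h -> Aff S1 p h) -> forall h, commutators K h -> Aff S2 p h.
Proof.
  intros HK h [x [x' [y [y' [Kx [Ky [Ix [Iy ->]]]]]]]].
  destruct (HK x Kx) as [Fx Ax]. destruct (HK y Ky) as [Fy Ay].
  split.
  - rewrite Fy, Fx, (inv_fix _ _ _ Iy Fy), (inv_fix _ _ _ Ix Fx). reflexivity.
  - intros s Hs. destruct (Ax s Hs) as [M [a [b [Sa Gx]]]].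
    destruct (Ay s Hs) as [N [a' [b' [Sa' Gy]]]].
    unfold S1 in *. subst a a'.
    destruct (comm_germ _ _ _ _ _ _ _ _ _ _ _ _ Gx Gy Rlt_0_1 Rlt_0_1 Ix Iy Hs) as [Kc G].
    eexists _, 1, 0. split; [split; reflexivity|]. eapply germ1_ext; [exact G| |]; field.
Qed.

Lemma list_sep (S : list R) (x0 : R) :
  exists e, 0 < e /\ forall z, In z S -> z <> x0 -> e <= Rabs (z - x0).
Proof.
  induction S as [|z0 S [e [He H]]].
  - exists 1. split; [lra|]. intros z [].
  - destruct (Req_EM_T z0 x0) as [E|E].
    + exists e. split; auto. intros z [<-|Hz] Hzx; [congruence|auto].
    + assert (0 < Rabs (z0 - x0)) by (apply Rabs_pos_lt; lra).
      exists (Rmin e (Rabs (z0 - x0))). split; [apply Rmin_pos; lra|].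
      intros z [<-|Hz] Hzx; [apply Rmin_r|].
      eapply Rle_trans; [apply Rmin_l|auto].
Qed.

Lemma list_bound (S : list R) : exists X, 0 < X /\ forall z, In z S -> Rabs z < X.
Proof.
  induction S as [|z0 S [X [HX H]]].
  - exists 1. split; [lra|]. intros z [].
  - exists (Rmax X (Rabs z0 + 1)). split; [eapply Rlt_le_trans; [exact HX|apply Rmax_l]|].
    intros z [<-|Hz].
    + eapply Rlt_le_trans; [|apply Rmax_r]. lra.
    + eapply Rlt_le_trans; [apply H; auto|apply Rmax_l].
Qed.

Lemma small_pos d e A B C : 0 < d -> 0 < e -> 0 <= A -> 0 < B -> 0 <= C ->
  exists eta, 0 < eta /\ eta < d /\ eta < e /\ eta * A < B /\ eta * C < 1.
Proof.
  intros Hd He HA HB HC.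
  assert (Hr1 : 0 < B / (A + 1)) by (apply Rdiv_lt_0_compat; lra).
  assert (Hr2 : 0 < 1 / (C + 1)) by (apply Rdiv_lt_0_compat; lra).
  set (m := Rmin (Rmin d e) (Rmin (B / (A + 1)) (1 / (C + 1)))).
  assert (Hm : 0 < m) by (unfold m; repeat apply Rmin_pos; lra).
  assert (m1 : m <= d) by (unfold m; eapply Rle_trans; [apply Rmin_l|apply Rmin_l]).
  assert (m2 : m <= e) by (unfold m; eapply Rle_trans; [apply Rmin_l|apply Rmin_r]).
  assert (m3 : m <= B / (A + 1)) by (unfold m; eapply Rle_trans; [apply Rmin_r|apply Rmin_l]).
  assert (m4 : m <= 1 / (C + 1)) by (unfold m; eapply Rle_trans; [apply Rmin_r|apply Rmin_r]).
  assert (E3 : B / (A + 1) * (A + 1) = B) by (field; lra).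
  assert (E4 : 1 / (C + 1) * (C + 1) = 1) by (field; lra).
  exists (m / 2). repeat split; try lra; nra.
Qed.

Lemma Rabs_s s : (s = 1 \/ s = -1) -> Rabs s = 1.
Proof. intros [-> | ->]; [apply Rabs_R1|rewrite Rabs_left; lra]. Qed.

Lemma between_side s x0 e x y z : (s = 1 \/ s = -1) ->
  0 < s * (x - x0) < e -> 0 < s * (y - x0) < e -> Rmin x y <= z <= Rmax x y ->
  z <> x0 /\ Rabs (z - x0) < e.
Proof.
  intros Hs Hx Hy Hz. unfold Rmin, Rmax in Hz.
  destruct Hs as [-> | ->]; destruct (Rle_dec x y); (split; [lra| apply Rabs_def1; lra]).
Qed.

Lemma between_inf s X x y z : (s = 1 \/ s = -1) ->
  s * x = X -> X < s * y -> Rmin x y <= z <= Rmax x y -> X <= Rabs z.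
Proof.
  intros Hs Hx Hy Hz. unfold Rmin, Rmax in Hz. pose proof (Rle_abs z). pose proof (Rle_abs (-z)) as Hz'.
  rewrite Rabs_Ropp in Hz'.
  destruct Hs as [-> | ->]; destruct (Rle_dec x y); lra.
Qed.

Lemma inv_lt w e : 0 < w -> 1 < e * w -> / w < e.
Proof.
  intros Hw H. apply (Rmult_lt_reg_r w); [exact Hw|]. rewrite Rinv_l; lra.
Qed.

Lemma base_fin f x0 s : piecewise_projective f -> P1_continuous_at f (Some x0) ->
  f (Some x0) = Some x0 -> (s = 1 \/ s = -1) ->
  exists M a b, 0 < a /\ germ1 (Some x0) f s M a b.
Proof.
  intros [S HS] Hc Hp Hs.
  pose proof (Rabs_s s Hs) as Hsa.
  assert (Hss : s * s = 1) by (destruct Hs as [-> | ->]; ring).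
  destruct (list_sep S x0) as [e [He HSe]].
  assert (Hx : ~ In (x0 + s * (e / 2)) S).
  { intro Hin. pose proof (HSe _ Hin) as H.
    replace (x0 + s * (e / 2) - x0) with (s * (e / 2)) in H by ring.
    rewrite Rabs_mult, Hsa, (Rabs_right (e/2)) in H by lra.
    assert (s * (e / 2) <> 0) by (destruct Hs as [-> | ->]; lra).
    assert (x0 + s * (e / 2) <> x0) by lra. lra. }
  destruct (HS _ Hx) as [a [b [c [d [Hdet Hf]]]]].
  assert (Hf' : forall y, 0 < s * (y - x0) < e -> f (Some y) = mobius a b c d (Some y)).
  { intros y Hy. apply Hf. intros z Hz Hzb.
    assert (Hxs : 0 < s * (x0 + s * (e / 2) - x0) < e).
    { replace (s * (x0 + s * (e / 2) - x0)) with (s * s * (e / 2)) by ring. rewrite Hss. lra. }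
    destruct (between_side s x0 e _ _ z Hs Hxs Hy Hzb) as [H1 H2].
    pose proof (HSe z Hz H1). lra. }
  assert (HN : a * x0 + b - x0 * (c * x0 + d) = 0).
  { destruct (Req_EM_T (a * x0 + b - x0 * (c * x0 + d)) 0) as [E|E]; [exact E|exfalso].
    assert (HN0 : 0 < Rabs (a * x0 + b - x0 * (c * x0 + d))) by (apply Rabs_pos_lt; exact E).
    set (N0 := a * x0 + b - x0 * (c * x0 + d)) in *.
    set (K := Rabs (c * x0 + d) + 1).
    assert (HK : 0 < K) by (unfold K; pose proof (Rabs_pos (c*x0+d)); lra).
    set (eps := Rabs N0 / (2 * K)).
    assert (Heps : 0 < eps) by (unfold eps; apply Rdiv_lt_0_compat; lra).
    assert (Eeps : eps * (2 * K) = Rabs N0) by (unfold eps; field; lra).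
    specialize (Hc (fun z => exists t, z = Some t /\ Rabs (t - x0) < eps)).
    rewrite Hp in Hc.
    destruct Hc as [del [Hdel Hdel']].
    { simpl. exists eps. split; [exact Heps|]. intros t Ht. exists t. auto. }
    destruct (small_pos del e (2 * Rabs (a - c * x0)) (Rabs N0) (Rabs c)) as [eta [H1 [H2 [H3 [H4 H5]]]]];
      try lra; try (pose proof (Rabs_pos (a - c*x0)); lra); try apply Rabs_pos.
    assert (Hy1 : Rabs (x0 + s * eta - x0) < del).
    { replace (x0 + s * eta - x0) with (s * eta) by ring.
      rewrite Rabs_mult, Hsa, Rabs_right; lra. }
    assert (Hy2 : 0 < s * (x0 + s * eta - x0) < e).
    { replace (s * (x0 + s * eta - x0)) with (s * s * eta) by ring. rewrite Hss. lra. }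
    destruct (Hdel' _ Hy1) as [t [Ht1 Ht2]].
    rewrite (Hf' _ Hy2) in Ht1. unfold mobius in Ht1.
    destruct (Req_EM_T (c * (x0 + s * eta) + d) 0) as [E2|E2]; [discriminate|].
    injection Ht1 as Ht1.
    assert (EN : a * (x0 + s * eta) + b - x0 * (c * (x0 + s * eta) + d)
                 = (t - x0) * (c * (x0 + s * eta) + d)) by (rewrite <- Ht1; field; exact E2).
    assert (EN2 : a * (x0 + s * eta) + b - x0 * (c * (x0 + s * eta) + d)
                 = N0 + (a - c * x0) * (s * eta)) by (unfold N0; ring).
    assert (ED : c * (x0 + s * eta) + d = (c * x0 + d) + c * (s * eta)) by ring.
    set (Nn := a * (x0 + s * eta) + b - x0 * (c * (x0 + s * eta) + d)) in *.
    set (Dd := c * (x0 + s * eta) + d) in *.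
    assert (R1 : Rabs Nn = Rabs (t - x0) * Rabs Dd) by (rewrite EN; apply Rabs_mult).
    assert (R2 : Rabs ((a - c * x0) * (s * eta)) = Rabs (a - c * x0) * eta)
      by (rewrite !Rabs_mult, Hsa, (Rabs_right eta); lra).
    assert (R3 : Rabs (c * (s * eta)) = Rabs c * eta)
      by (rewrite !Rabs_mult, Hsa, (Rabs_right eta); lra).
    assert (T1 : Rabs N0 <= Rabs Nn + Rabs (a - c * x0) * eta).
    { rewrite <- R2. replace N0 with (Nn + - ((a - c * x0) * (s * eta))) by (rewrite EN2; ring).
      eapply Rle_trans; [apply Rabs_triang|]. rewrite Rabs_Ropp. lra. }
    assert (T2 : Rabs Dd <= Rabs (c * x0 + d) + Rabs c * eta).
    { rewrite <- R3, ED. apply Rabs_triang. }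
    assert (PD : 0 < Rabs Dd) by (apply Rabs_pos_lt; exact E2).
    assert (Q1 : Rabs (t - x0) * Rabs Dd <= eps * Rabs Dd) by (apply Rmult_le_compat_r; lra).
    assert (Q2 : eps * Rabs Dd < eps * K) by (apply Rmult_lt_compat_l; unfold K in *; lra).
    nra. }
  set (D0 := c * x0 + d) in *.
  assert (HD : (a - c * x0) * D0 = 1).
  { replace ((a - c * x0) * D0) with ((a * d - b * c) + c * (a * x0 + b - x0 * D0)) by (unfold D0; ring).
    rewrite HN, Hdet. ring. }
  assert (HD0 : D0 <> 0) by (intro Z; rewrite Z in HD; lra).
  assert (Ha : a = c * x0 + / D0).
  { apply (Rmult_eq_reg_r D0); [|exact HD0].
    replace ((c * x0 + / D0) * D0) with (c * x0 * D0 + 1) by (field; exact HD0). lra. }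
  assert (Hb : b = x0 * D0 - a * x0) by lra.
  assert (HA1 : Rabs D0 * Rabs (a - c * x0) = 1) by (rewrite <- Rabs_mult, Rmult_comm, HD; apply Rabs_R1).
  exists (2 / e + Rabs c * Rabs (a - c * x0) + 1), (D0 * D0), (c * D0).
  split; [nra|].
  intros u Hu. simpl emb.
  assert (Hc0 : 0 <= Rabs c * Rabs (a - c * x0)) by (apply Rmult_le_pos; apply Rabs_pos).
  assert (He2 : 0 < 2 / e) by (apply Rdiv_lt_0_compat; lra).
  assert (Hsu : 0 < s * u) by lra.
  assert (Hu0 : u <> 0) by (intro Z; rewrite Z in Hsu; lra).
  assert (Hinv : s * / u = / (s * u)) by (destruct Hs as [-> | ->]; field; exact Hu0).
  assert (Hlt : / (s * u) < e).
  { apply inv_lt; [exact Hsu|].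
    assert (E2e : 2 / e * e = 2) by (field; lra). nra. }
  assert (Hy : 0 < s * (x0 + / u - x0) < e).
  { replace (s * (x0 + / u - x0)) with (s * / u) by ring. rewrite Hinv.
    split; [apply Rinv_0_lt_compat; exact Hsu|exact Hlt]. }
  rewrite (Hf' _ Hy). unfold mobius.
  assert (Habsu : Rabs u = s * u) by (destruct Hs as [-> | ->]; [rewrite Rabs_right|rewrite Rabs_left]; lra).
  assert (Hnz : D0 * u + c <> 0).
  { intro Z. assert (Z2 : Rabs (D0 * u) = Rabs c) by (replace (D0 * u) with (- c) by lra; apply Rabs_Ropp).
    rewrite Rabs_mult, Habsu in Z2.
    assert (Rabs c * Rabs (a - c * x0) < s * u) by lra.
    assert (0 < Rabs D0) by (apply Rabs_pos_lt; exact HD0).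
    nra. }
  destruct (Req_EM_T (c * (x0 + / u) + d) 0) as [E|E].
  { exfalso. apply Hnz. apply (Rmult_eq_reg_r (/ u)); [|apply Rinv_neq_0_compat; exact Hu0].
    rewrite Rmult_0_l. rewrite <- E. unfold D0. field. exact Hu0. }
  f_equal. rewrite Hb, Ha. unfold D0 in *. field.
  repeat split; try exact Hu0; try exact HD0; try exact E.
  all: try (intro Z; apply Hnz; unfold D0; nra).
Qed.

Lemma base_inf f s : piecewise_projective f -> P1_continuous_at f None ->
  f None = None -> (s = 1 \/ s = -1) ->
  exists M a b, 0 < a /\ germ1 None f s M a b.
Proof.
  intros [S HS] Hc Hp Hs.
  pose proof (Rabs_s s Hs) as Hsa.
  assert (Hss : s * s = 1) by (destruct Hs as [-> | ->]; ring).
  destruct (list_bound S) as [X [HX HSX]].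
  assert (Hx : ~ In (s * X) S).
  { intro Hin. pose proof (HSX _ Hin) as H. rewrite Rabs_mult, Hsa, Rabs_right in H; lra. }
  destruct (HS _ Hx) as [a [b [c [d [Hdet Hf]]]]].
  assert (Hf' : forall y, X < s * y -> f (Some y) = mobius a b c d (Some y)).
  { intros y Hy. apply Hf. intros z Hz Hzb.
    assert (Hxs : s * (s * X) = X) by (rewrite <- Rmult_assoc, Hss; ring).
    pose proof (between_inf s X _ _ z Hs Hxs Hy Hzb). pose proof (HSX z Hz). lra. }
  assert (Hc0 : c = 0).
  { destruct (Req_EM_T c 0) as [E|E]; [exact E|exfalso].
    assert (Pc : 0 < Rabs c) by (apply Rabs_pos_lt; exact E).
    specialize (Hc (fun z => z = None \/ exists t, z = Some t /\ Rabs (a / c) + 1 < Rabs t)).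
    rewrite Hp in Hc.
    destruct Hc as [_ [M' HM']].
    { simpl. split; [left; reflexivity|]. exists (Rabs (a / c) + 1). intros t Ht. right. exists t. auto. }
    set (Y := Rmax X (Rabs M') + (Rabs d + / Rabs c) / Rabs c + 1).
    assert (HY1 : Rmax X (Rabs M') <= Y - 1 - (Rabs d + / Rabs c) / Rabs c) by (unfold Y; lra).
    assert (Pic : 0 < / Rabs c) by (apply Rinv_0_lt_compat; exact Pc).
    assert (Q0 : 0 < (Rabs d + / Rabs c) / Rabs c) by (apply Rdiv_lt_0_compat; [pose proof (Rabs_pos d)|]; lra).
    assert (HXm : X <= Rmax X (Rabs M')) by apply Rmax_l.
    assert (HMm : Rabs M' <= Rmax X (Rabs M')) by apply Rmax_r.
    pose proof (Rle_abs M').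
    assert (Hy1 : X < s * (s * Y)) by (rewrite <- Rmult_assoc, Hss; lra).
    assert (Hy2 : M' < Rabs (s * Y)) by (rewrite Rabs_mult, Hsa, Rabs_right; lra).
    assert (Hcy : Rabs (c * (s * Y)) = Rabs c * Y) by (rewrite !Rabs_mult, Hsa, (Rabs_right Y); lra).
    assert (E1 : Rabs c * ((Rabs d + / Rabs c) / Rabs c) = Rabs d + / Rabs c) by (field; lra).
    assert (Hbig : Rabs d + / Rabs c < Rabs c * Y) by nra.
    assert (Htri : Rabs (c * (s * Y)) <= Rabs (c * (s * Y) + d) + Rabs d).
    { replace (c * (s * Y)) with ((c * (s * Y) + d) + - d) at 1 by ring.
      eapply Rle_trans; [apply Rabs_triang|]. rewrite Rabs_Ropp. lra. }
    assert (HW : / Rabs c < Rabs (c * (s * Y) + d)) by lra.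
    assert (HW1 : 1 < Rabs (c * (c * (s * Y) + d))).
    { rewrite Rabs_mult. assert (Rabs c * / Rabs c = 1) by (field; lra). nra. }
    destruct (HM' _ Hy2) as [E2|[t [Ht1 Ht2]]]; rewrite (Hf' _ Hy1) in *; unfold mobius in *;
      destruct (Req_EM_T (c * (s * Y) + d) 0) as [E3|E3];
      try (rewrite E3, Rabs_R0 in HW; lra); try discriminate.
    injection Ht1 as Ht1.
    assert (Hb : b = (a * d - 1) / c) by (apply (Rmult_eq_reg_r c); [|exact E]; field_simplify; lra).
    assert (Ev : t = a / c + - / (c * (c * (s * Y) + d))).
    { rewrite <- Ht1, Hb. field. split; assumption. }
    assert (T : Rabs t <= Rabs (a / c) + Rabs (- / (c * (c * (s * Y) + d)))) by (rewrite Ev; apply Rabs_triang).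
    rewrite Rabs_Ropp, Rabs_inv in T.
    assert (/ Rabs (c * (c * (s * Y) + d)) < 1).
    { apply inv_lt; lra. }
    lra. }
  subst c.
  assert (Had : a * d = 1) by lra.
  assert (Hd : d <> 0) by (intro Z; rewrite Z in Had; lra).
  assert (Ha0 : a <> 0) by (intro Z; rewrite Z in Had; lra).
  exists X, (a * a), (a * b). split; [nra|].
  intros u Hu. simpl emb. rewrite (Hf' _ Hu). unfold mobius.
  destruct (Req_EM_T (0 * u + d) 0) as [E|E]; [exfalso; lra|].
  f_equal. assert (Ea : a = / d) by (apply (Rmult_eq_reg_r d); [|exact Hd]; rewrite Rinv_l; lra).
  rewrite Ea. field. exact Hd.
Qed.

Lemma base f p : in_G f -> f p = p -> Aff S0 p f.
Proof.
  intros [f' [_ [Hc [_ Hpw]]]] Hp. split; [exact Hp|].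
  intros s Hs. destruct p as [x0|].
  - destruct (base_fin f x0 s Hpw (Hc _) Hp Hs) as [M [a [b [Ha G]]]].
    exists M, a, b. split; [exact Ha|exact G].
  - destruct (base_inf f s Hpw (Hc _) Hp Hs) as [M [a [b [Ha G]]]].
    exists M, a, b. split; [exact Ha|exact G].
Qed.

Lemma S0_props :
  (forall a b, S0 a b -> 0 < a) /\ S0 1 0 /\
  (forall a b a' b', S0 a b -> S0 a' b' -> S0 (a * a') (a * b' + b)) /\
  (forall a b, S0 a b -> S0 (/ a) (- b / a)).
Proof.
  unfold S0. repeat split; intros; try lra.
  - apply Rmult_lt_0_compat; assumption.
  - apply Rinv_0_lt_compat; assumption.
Qed.

Lemma S1_props :
  (forall a b, S1 a b -> 0 < a) /\ S1 1 0 /\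
  (forall a b a' b', S1 a b -> S1 a' b' -> S1 (a * a') (a * b' + b)) /\
  (forall a b, S1 a b -> S1 (/ a) (- b / a)).
Proof.
  unfold S1. repeat split; intros; subst; try lra; try ring; try apply Rinv_1.
Qed.

Lemma S2_props :
  (forall a b, S2 a b -> 0 < a) /\ S2 1 0 /\
  (forall a b a' b', S2 a b -> S2 a' b' -> S2 (a * a') (a * b' + b)) /\
  (forall a b, S2 a b -> S2 (/ a) (- b / a)).
Proof.
  unfold S2. repeat split; intros; repeat match goal with H : _ /\ _ |- _ => destruct H end;
    subst; try lra; try ring; try apply Rinv_1; try field.
Qed.

Theorem lemma1 (f g : P1 -> P1) (p : P1) :
  in_H f -> in_H g -> f p = p -> g p = p ->
  forall h, second_derived (gen (fun k => k = f \/ k = g)) h ->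
  exists U, P1_nbhd p U /\ forall q, U q -> h q = q.
Proof.
  intros [Gf _] [Gg _] Fp Gp h Hh.
  destruct S0_props as [A1 [A2 [A3 A4]]].
  destruct S1_props as [B1 [B2 [B3 B4]]].
  destruct S2_props as [C1 [C2 [C3 C4]]].
  assert (L0 : forall k, gen (fun k => k = f \/ k = g) k -> Aff S0 p k).
  { apply gen_aff; auto. intros k [-> | ->]; apply base; assumption. }
  assert (L1 : forall k, derived (gen (fun k => k = f \/ k = g)) k -> Aff S1 p k).
  { apply gen_aff; auto. apply comm01. exact L0. }
  assert (L2 : forall k, second_derived (gen (fun k => k = f \/ k = g)) k -> Aff S2 p k).
  { apply gen_aff; auto. apply comm12. exact L1. }
  destruct (L2 h Hh) as [Hp Ah].
  destruct (Ah 1 (or_introl eq_refl)) as [M1 [a1 [b1 [[-> ->] G1]]]].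
  destruct (Ah (-1) (or_intror eq_refl)) as [M2 [a2 [b2 [[-> ->] G2]]]].
  set (M := Rabs M1 + Rabs M2 + 1).
  pose proof (Rle_abs M1). pose proof (Rle_abs M2). pose proof (Rabs_pos M1). pose proof (Rabs_pos M2).
  exists (fun q => q = p \/ exists u, (M1 < 1 * u \/ M2 < -1 * u) /\ q = emb p u).
  split.
  - destruct p as [x0|].
    + simpl. exists (/ M). split; [apply Rinv_0_lt_compat; unfold M; lra|].
      intros t Ht. destruct (Req_EM_T t x0) as [E|E]; [left; rewrite E; reflexivity|right].
      assert (Pt : 0 < Rabs (t - x0)) by (apply Rabs_pos_lt; lra).
      exists (/ (t - x0)). split.
      * assert (HtM : Rabs (t - x0) * M < 1).
        { apply (Rmult_lt_compat_r M) in Ht; [|unfold M; lra].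
          rewrite Rinv_l in Ht; [lra|unfold M; lra]. }
        assert (Hu : Rabs (/ (t - x0)) * Rabs (t - x0) = 1)
          by (rewrite Rabs_inv; field; lra).
        assert (Hgt : M < Rabs (/ (t - x0))) by nra.
        destruct (Rcase_abs (/ (t - x0))) as [N|N];
          [rewrite Rabs_left in Hgt by exact N; right | rewrite Rabs_right in Hgt by exact N; left];
          unfold M in Hgt; lra.
      * simpl. f_equal. rewrite Rinv_inv. ring.
    + simpl. split; [left; reflexivity|]. exists M. intros t Ht. right. exists t. split; [|reflexivity].
      destruct (Rcase_abs t) as [N|N];
        [rewrite Rabs_left in Ht by exact N; right | rewrite Rabs_right in Ht by exact N; left];
        unfold M in Ht; lra.
  - intros q [-> | [u [[Hu|Hu] ->]]].
    + exact Hp.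
    + rewrite (G1 u Hu). f_equal. ring.
    + rewrite (G2 u Hu). f_equal. ring.
Qed.
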